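(* Let $\Gamma=[\gamma;\zeta;\beta]$ and $\Gamma'=[\gamma;\zeta';\beta]$ be LR-tableaux of the same partition type $(\alpha,\beta,\gamma)$ with entries at most $2$, and let $\Delta,\Delta'$ be arc diagrams of Klein tableaux refining $\Gamma$, $\Gamma'$ respectively. (1) If $\Delta$ is obtained from $\Delta'$ by a single move of type (A) or (B), then $\Gamma=\Gamma'$. (2) If $\Delta$ is obtained from $\Delta'$ by a single move of type (C) or (D), then $\Gamma'\leq_{\rm part}\Gamma$ and $\Gamma\neq\Gamma'$.
   Context: Young diagram conventions: a partition $\lambda$ has columns of lengths $\lambda_1,\lambda_2,\ldots$, rows numbered from the top; $\bar\lambda$ is the conjugate partition. An LR-tableau of type $(\alpha,\beta,\gamma)$ with entries at most $2$ is a filling of the skew diagram $\beta\setminus\gamma$ with $\bar\alpha_1$ entries $1$ and $\bar\alpha_2$ entries $2$, weakly increasing along rows, strictly increasing down columns, and such that for each $c\ge0$ the number of $2$'s in columns to the right of column $c$ is at most the number of $1$'s there. It is encoded as $[\gamma;\zeta;\beta]$ where $\zeta$ is the shape formed by the empty boxes and the boxes $1$. Dominance order on partitions: $\zeta\le\zeta'$ if $\sum_{i=1}^\ell\zeta_i\le\sum_{i=1}^\ell\zeta'_i$ for all $\ell$; then $[\gamma;\zeta;\beta]\leq_{\rm part}[\gamma;\zeta';\beta]$ if $\zeta\le\zeta'$. A Klein tableau is an LR-tableau where each entry $2$ carries a subscript $r$ ($2_r$) such that (a) $1\le r\le m-1$ if it is in row $m$; (b) $r=m-1$ if the box above it contains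 $1$; (c) the number of $2_r$'s is at most the number of $1$'s in row $r$; it refines the LR-tableau obtained by deleting the subscripts. Its arc diagram: an arc $(m,r)$ for each $2_r$ in row $m$, and at each position $r$ as many poles as the number of $1$'s in row $r$ minus the number of arcs ending at $r$. Moves: for $m>n>r>s$, (A) replaces arcs $(m,r),(n,s)$ by $(m,s),(n,r)$; (C) replaces arcs $(m,r),(n,s)$ by $(m,n),(r,s)$; for $m>r>s$, (B) replaces arc $(m,s)$ and pole at $r$ by arc $(m,r)$ and pole at $s$; (D) replaces arc $(m,s)$ and pole at $r$ by pole at $m$ and arc $(r,s)$. *)

(* Defs.v *)
From mathcomp Require Import all_boot.
Set Implicit Arguments. Unset Strict Implicit. Unset Printing Implicit Defensive.

(* Conventions: a partition is a nonincreasing seq of POSITIVE nats, listing the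
   column lengths lambda_1 >= lambda_2 >= ... . Columns and rows are numbered
   from 1 (rows from the top). Box (i, j) = row i, column j. *)

Definition is_part (l : seq nat) : bool := sorted geq l && all (fun x => 0 < x) l.

(* length of column j (1-indexed); 0 beyond the last column *)
Definition colL (l : seq nat) (j : nat) : nat := nth 0 l j.-1.

Definition conj (a : seq nat) (k : nat) : nat := count (fun x => k <= x) a.

Definition subshape (l m : seq nat) : Prop := forall j, colL l j <= colL m j.

Definition inskew (g b : seq nat) (i j : nat) : bool :=
  (1 <= j) && (colL g j < i) && (i <= colL b j).

(* the filling encoded by [gamma; zeta; beta]: 1 in the boxes of zeta, 2 elsewhere *)
Definition entry (z : seq nat) (i j : nat) : nat := if i <= colL z j then 1 else 2.

Definition nrows (b : seq nat) : nat := head 0 b.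
Definition ncols (b : seq nat) : nat := size b.

Definition cnt_right (g z b : seq nat) (k c : nat) : nat :=
  \sum_(c.+1 <= j < (ncols b).+1) \sum_(0 <= i < (nrows b).+1)
     nat_of_bool (inskew g b i j && (entry z i j == k)).

Definition ones_row (g z b : seq nat) (r : nat) : nat :=
  \sum_(1 <= j < (ncols b).+1) nat_of_bool (inskew g b r j && (entry z r j == 1)).

Definition LR (a b g z : seq nat) : Prop :=
  [/\ [/\ is_part a, is_part b, is_part g & is_part z],
      all (fun x => x <= 2) a,
      subshape g z /\ subshape z b,
      (forall i j j', j < j' -> inskew g b i j -> inskew g b i j' ->
         entry z i j <= entry z i j') &
      [/\
      (forall i i' j, i < i' -> inskew g b i j -> inskew g b i' j ->
         entry z i j < entry z i' j),
      cnt_right g z b 1 0 = conj a 1,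
          cnt_right g z b 2 0 = conj a 2 &
          forall c, cnt_right g z b 2 c <= cnt_right g z b 1 c]].

(* Klein tableau: sub m j is the subscript r of the entry 2_r in box (m,j)
   (irrelevant on boxes not containing 2). *)

Definition arcsK (g z b : seq nat) (sub : nat -> nat -> nat) (m r : nat) : nat :=
  \sum_(1 <= j < (ncols b).+1)
     nat_of_bool [&& inskew g b m j, entry z m j == 2 & sub m j == r].

(* number of entries 2_r in the whole tableau = number of arcs ending at r *)
Definition arcs_to (g z b : seq nat) (sub : nat -> nat -> nat) (r : nat) : nat :=
  \sum_(0 <= m < (nrows b).+1) arcsK g z b sub m r.

Definition Klein (g z b : seq nat) (sub : nat -> nat -> nat) : Prop :=
  [/\ (forall m j, inskew g b m j -> entry z m j = 2 -> 1 <= sub m j <= m.-1),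
      (forall m j, inskew g b m j -> entry z m j = 2 ->
         inskew g b m.-1 j -> entry z m.-1 j = 1 -> sub m j = m.-1) &
      (forall r, arcs_to g z b sub r <= ones_row g z b r)].

(* arc diagrams: multiplicity of arcs (m,r) and number of poles at each position *)
Record arcdiag := ArcDiag { arcs : nat -> nat -> nat; poles : nat -> nat }.

Definition arc_diagram (g z b : seq nat) (sub : nat -> nat -> nat) : arcdiag :=
  ArcDiag (arcsK g z b sub)
          (fun r => ones_row g z b r - arcs_to g z b sub r).

Definition dl2 (m r x y : nat) : nat := nat_of_bool ((x == m) && (y == r)).
Definition dl1 (r x : nat) : nat := nat_of_bool (x == r).

(* moveX D' D : D is obtained from D' by a single move of type X *)
Definition moveA (D' D : arcdiag) : Prop :=
  exists m n r s, [/\ s < r, r < n, n < m,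
    (forall x y, arcs D x y + dl2 m r x y + dl2 n s x y
                 = arcs D' x y + dl2 m s x y + dl2 n r x y) &
    (forall x, poles D x = poles D' x)].

Definition moveB (D' D : arcdiag) : Prop :=
  exists m r s, [/\ s < r, r < m,
    (forall x y, arcs D x y + dl2 m s x y = arcs D' x y + dl2 m r x y) &
    (forall x, poles D x + dl1 r x = poles D' x + dl1 s x)].

Definition moveC (D' D : arcdiag) : Prop :=
  exists m n r s, [/\ s < r, r < n, n < m,
    (forall x y, arcs D x y + dl2 m r x y + dl2 n s x y
                 = arcs D' x y + dl2 m n x y + dl2 r s x y) &
    (forall x, poles D x = poles D' x)].

Definition moveD (D' D : arcdiag) : Prop :=
  exists m r s, [/\ s < r, r < m,
    (forall x y, arcs D x y + dl2 m s x y = arcs D' x y + dl2 r s x y) &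
    (forall x, poles D x + dl1 r x = poles D' x + dl1 m x)].

Definition dominated (z z' : seq nat) : Prop :=
  forall l, \sum_(1 <= i < l.+1) colL z i <= \sum_(1 <= i < l.+1) colL z' i.

(* Main.v *)
Require Import Defs.
From mathcomp Require Import all_boot zify.

Lemma geq_tr : transitive geq.
Proof. by move=> a b c /= h1 h2; exact: leq_trans h2 h1. Qed.

Lemma path_nth_le x s i : path geq x s -> nth 0 s i <= x.
Proof.
move=> hp; have hall := order_path_min geq_tr hp.
case: (ltnP i (size s)) => hi; last by rewrite nth_default.
exact: (allP hall) _ (mem_nth 0 hi).
Qed.

Lemma nth_le_head b i : sorted geq b -> nth 0 b i <= nth 0 b 0.
Proof.
case: b => [|x b] //= hp; case: i => [|i] //=; exact: path_nth_le.
Qed.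

Lemma conj_char z y j : sorted geq z -> 0 < y ->
  (y <= nth 0 z j) = (j < conj z y).
Proof.
elim: z j => [|x z IH] j /=; first by rewrite /conj /= nth_nil; case: y.
move=> hp hy; have hs := path_sorted hp; have hb i := @path_nth_le x z i hp.
have c0 : x < y -> conj z y = 0.
  move=> hxy; apply/eqP; rewrite -leqn0 leqNgt -has_count; apply/hasPn => w wz /=.
  have := (allP (order_path_min geq_tr hp)) w wz => /= hw; rewrite -ltnNge; exact: leq_ltn_trans hw hxy.
rewrite /conj /= -/(conj z y).
case: j => [|j] /=.
  case: (leqP y x) => hxy //=; by rewrite c0.
case: (leqP y x) => hxy /=; first by rewrite add1n ltnS IH.
rewrite c0 // add0n ltn0; apply/negbTE; rewrite -ltnNge; exact: leq_ltn_trans (hb j) hxy.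
Qed.

Lemma sum_lt K a : \sum_(0 <= j < K) (j < a) = minn a K.
Proof.
elim: K => [|K IH]; first by rewrite big_geq // minn0.
rewrite big_nat_recr //= IH; case: (ltnP K a) => h /=; lia.
Qed.

Lemma sum_delta K m c : \sum_(0 <= x < K) ((x == m) * c) = (m < K) * c.
Proof.
elim: K => [|K IH]; first by rewrite big_geq.
rewrite big_nat_recr //= IH ltnS [K == m]eq_sym.
case: (ltngtP m K) => h /=; lia.
Qed.

Lemma ones_conj a b g z r : LR a b g z -> 0 < r ->
  ones_row g z b r + conj g r = conj z r.
Proof.
case=> [[_ /andP[sb _] /andP[sg _] /andP[sz _]] _ [hgz hzb] _ _] hr.
have cz_le : conj z r <= ncols b.
  rewrite leqNgt; apply/negP => h.
  have := hzb (ncols b).+1; rewrite /colL /= (nth_default 0 (leqnn _)) leqn0 => /eqP e.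
  by move: h; rewrite -conj_char // e; case: r hr.
have cg_le : conj g r <= conj z r.
  rewrite leqNgt; apply/negP => h.
  have := hgz (conj z r).+1; rewrite /colL /= => hh.
  move: h; rewrite -conj_char // => h2.
  by have := leq_trans h2 hh; rewrite conj_char // ltnn.
rewrite /ones_row big_add1 /=.
have -> : \sum_(0 <= i < ncols b) (inskew g b r i.+1 && (entry z r i.+1 == 1))
   = \sum_(0 <= i < ncols b) ((conj g r <= i) && (i < conj z r)).
  apply: eq_bigr => i _; rewrite /inskew /entry /colL /=.
  case: (leqP r (nth 0 z i)) => h /=.
  - rewrite -(conj_char z r i sz hr) h andbT.
    have hb : r <= nth 0 b i := leq_trans h (hzb i.+1).
    rewrite hb andbT; case: (ltnP (nth 0 g i) r) => h3 /=.
      by rewrite leqNgt -conj_char // -ltnNge h3.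
    by rewrite leqNgt -conj_char // h3.
  - by rewrite andbF -(conj_char z r i sz hr) (leqNgt r) h andbF.
have hz : \sum_(0 <= i < ncols b) (i < conj z r) = conj z r.
  by rewrite sum_lt; exact/minn_idPl.
have hg : \sum_(0 <= i < ncols b) (i < conj g r) = conj g r.
  by rewrite sum_lt; apply/minn_idPl; exact: leq_trans cg_le cz_le.
rewrite -[RHS]hz -[X in _ + X = _]hg -big_split /=; apply: eq_bigr => i _.
case: (leqP (conj g r) i) => h1 /=; first by rewrite addn0.
by rewrite (leq_trans h1 cg_le).
Qed.

Lemma conj_eq_part z z' : is_part z -> is_part z' ->
  (forall y, 0 < y -> conj z y = conj z' y) -> z = z'.
Proof.
move=> /andP[sz pz] /andP[sz' pz'] E.
have le : forall u v, sorted geq u -> sorted geq v ->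
    (forall y, 0 < y -> conj u y = conj v y) -> forall j, nth 0 u j <= nth 0 v j.
  move=> u v su sv Euv j; case e: (nth 0 u j) => [|y] //.
  have : y.+1 <= nth 0 u j by rewrite e.
  by rewrite conj_char // Euv // -conj_char.
have en : forall j, nth 0 z j = nth 0 z' j.
  move=> j; apply/eqP; rewrite eqn_leq le //= le // => y hy; by rewrite E.
have sz1 : size z = size z'.
  have h1 : conj z 1 = size z by apply/eqP; rewrite -all_count.
  have h2 : conj z' 1 = size z' by apply/eqP; rewrite -all_count.
  by rewrite -h1 -h2 E.
by apply: (eq_from_nth (x0:=0)) => // i _; rewrite en.
Qed.

Lemma arcs_zero g z b sub x y : sorted geq b -> nrows b < x ->
  arcsK g z b sub x y = 0.
Proof.
move=> sb hx; rewrite /arcsK big1 // => j _.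
apply/eqP; rewrite eqb0; apply/negP => /and3P[/andP[_ h] _ _].
have := @nth_le_head b j.-1 sb; rewrite /nrows in hx; move: h hx; rewrite /colL.
case: b sb => [|c b] _ /=; first by rewrite nth_nil; lia.
lia.
Qed.

Lemma sum_cols a b g z l : LR a b g z ->
  \sum_(1 <= i < l.+1) colL z i = \sum_(0 <= y < nrows b) minn (conj z y.+1) l.
Proof.
move=> hL; have [[_ /andP[sb _] _ /andP[sz _]] _ [_ hzb] _ _] := hL.
rewrite big_add1 /=.
have -> : \sum_(0 <= i < l) colL z i.+1 =
          \sum_(0 <= i < l) \sum_(0 <= y < nrows b) (i < conj z y.+1).
  apply: eq_bigr => i _; rewrite /colL /=.
  have hH : nth 0 z i <= nrows b.
    by have := hzb i.+1; rewrite /colL /= /nrows => h; apply: leq_trans h _; case: b sb {hL hzb} => [|c b] sb //=; exact: (@nth_le_head _ i sb).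
  rewrite -[LHS](minn_idPl hH) -sum_lt; apply: eq_bigr => y _.
  by rewrite -conj_char.
rewrite exchange_big_nat; apply: eq_bigr => y _; by rewrite sum_lt.
Qed.

Lemma dom_lemma a b g z z' r n : LR a b g z -> LR a b g z' -> 0 < r -> r < n ->
  (forall y, 0 < y -> conj z y + (y == r) = conj z' y + (y == n)) ->
  dominated z' z /\ z <> z'.
Proof.
move=> hL hL' hr hrn rel.
have [[_ /andP[sb _] _ /andP[sz _]] _ [_ hzb] _ _] := hL.
split; last first.
  move=> e; subst z'; have := rel r hr; rewrite eqxx.
  have -> : (r == n) = false by apply/eqP; lia.
  lia.
have Rr := rel r hr; have Rn := rel n (ltn_trans hr hrn).
rewrite eqxx in Rr; rewrite eqxx in Rn; rewrite (_ : (r == n) = false) in Rr; last by apply/eqP; lia.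
rewrite (_ : (n == r) = false) in Rn; last by apply/eqP; lia.
have hmono : conj z n <= conj z r.
  by apply: sub_count => w /= h; exact: leq_trans (ltnW hrn) h.
have hnH : n <= nrows b.
  have : 0 < conj z n by lia.
  rewrite -(conj_char z n 0 sz) ?(ltn_trans hr hrn) // => h.
  apply: leq_trans h _; have := hzb 1; rewrite /colL /= /nrows => h1; exact: h1.
move=> l; rewrite (sum_cols _ _ _ _ l hL) (sum_cols _ _ _ _ l hL').
set Z := fun y => minn (conj z y.+1) l.
set Z' := fun y => minn (conj z' y.+1) l.
have pt : forall y, Z y + (y == r.-1) * minn (conj z' r) l + (y == n.-1) * minn (conj z' n) l
   = Z' y + (y == r.-1) * minn (conj z r) l + (y == n.-1) * minn (conj z n) l.
  move=> y; rewrite /Z /Z'.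
  have E := rel y.+1 (ltn0Sn y).
  rewrite -(eqSS y) -(eqSS y) !prednK ?(ltn_trans hr hrn) //.
  case: (@eqP _ y.+1 r) E => [e1|ne1]; case: (@eqP _ y.+1 n) => [e2|ne2] /= E; try lia.
  - rewrite e1; lia.
  - rewrite e2; lia.
have S : \sum_(0 <= y < nrows b) (Z y + (y == r.-1) * minn (conj z' r) l + (y == n.-1) * minn (conj z' n) l)
   = \sum_(0 <= y < nrows b) (Z' y + (y == r.-1) * minn (conj z r) l + (y == n.-1) * minn (conj z n) l).
  by apply: eq_bigr => y _; exact: pt.
rewrite !big_split /= !sum_delta in S.
have h1 : r.-1 < nrows b by lia.
have h2 : n.-1 < nrows b by lia.
rewrite h1 h2 !mul1n in S.
rewrite /Z /Z' in S; move: Rr Rn; rewrite /= => Rr Rn; lia.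
Qed.

Lemma sum_dl2 K m r y : m <= K ->
  \sum_(0 <= x < K.+1) dl2 m r x y = (y == r).
Proof.
move=> hm; rewrite (eq_bigr (fun x => (x == m) * (y == r))); last first.
  by move=> x _; rewrite /dl2 mulnb.
by rewrite sum_delta ltnS hm mul1n.
Qed.

Lemma ones_diag g z b sub y : Klein g z b sub ->
  ones_row g z b y = poles (arc_diagram g z b sub) y +
     \sum_(0 <= x < (nrows b).+1) arcs (arc_diagram g z b sub) x y.
Proof. by case=> _ _ kc; rewrite /= subnK // kc. Qed.

Lemma sum_id (E E' : arcdiag) K f f' y :
  (forall x, arcs E x y + f x = arcs E' x y + f' x) ->
  \sum_(0 <= x < K) arcs E x y + \sum_(0 <= x < K) f x =
  \sum_(0 <= x < K) arcs E' x y + \sum_(0 <= x < K) f' x.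
Proof. by move=> h; rewrite -!big_split; apply: eq_bigr => x _; exact: h. Qed.

Lemma sum_dl2_2 K m r n s y : m <= K -> n <= K ->
  \sum_(0 <= x < K.+1) (dl2 m r x y + dl2 n s x y) = (y == r) + (y == s).
Proof. by move=> hm hn; rewrite big_split /= !sum_dl2. Qed.

Ltac neqs := repeat match goal with |- context [?a == ?b] =>
  have ->: (a == b) = false by apply/eqP; lia end.

Theorem lemma2p5 (alpha beta gamma zeta zeta' : seq nat)
    (sub sub' : nat -> nat -> nat) :
  LR alpha beta gamma zeta -> LR alpha beta gamma zeta' ->
  Klein gamma zeta beta sub -> Klein gamma zeta' beta sub' ->
  ((moveA (arc_diagram gamma zeta' beta sub') (arc_diagram gamma zeta beta sub) \/
    moveB (arc_diagram gamma zeta' beta sub') (arc_diagram gamma zeta beta sub)) ->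
     zeta = zeta') /\
  ((moveC (arc_diagram gamma zeta' beta sub') (arc_diagram gamma zeta beta sub) \/
    moveD (arc_diagram gamma zeta' beta sub') (arc_diagram gamma zeta beta sub)) ->
     dominated zeta' zeta /\ zeta <> zeta').
Proof.
move=> hL hL' hK hK'.
have [[_ /andP[sb _] _ pz] _ _ _ _] := hL.
have [[_ _ _ pz'] _ _ _ _] := hL'.
set D := arc_diagram gamma zeta beta sub.
set D' := arc_diagram gamma zeta' beta sub'.
set H := nrows beta.
have z0 : forall x y, H < x -> arcs D x y = 0.
  by move=> x y hx; exact: arcs_zero.
have z0' : forall x y, H < x -> arcs D' x y = 0.
  by move=> x y hx; exact: arcs_zero.
set AT := fun (E : arcdiag) y => \sum_(0 <= x < H.+1) arcs E x y.
have oD : forall y, ones_row gamma zeta beta y = poles D y + AT D y.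
  move=> y; exact: ones_diag _ _ _ _ y hK.
have oD' : forall y, ones_row gamma zeta' beta y = poles D' y + AT D' y.
  move=> y; exact: ones_diag _ _ _ _ y hK'.
have cD := fun y (hy : 0 < y) => @ones_conj _ _ _ _ y hL hy.
have cD' := fun y (hy : 0 < y) => @ones_conj _ _ _ _ y hL' hy.
split.
- case.
  + case=> m [n [r [s [hsr hrn hnm HA HP]]]].
    have bm : m <= H.
      rewrite leqNgt; apply/negP => hm; move: (HA m r).
      rewrite z0 // z0' // /dl2 !eqxx; neqs; by move/eqP.
    have S : forall y, AT D y + ((y == r) + (y == s)) = AT D' y + ((y == s) + (y == r)).
      move=> y; have hn : n <= H by exact: leq_trans (ltnW hnm) bm.
      rewrite /AT -(sum_dl2_2 H m r n s y bm hn) -(sum_dl2_2 H m s n r y bm hn).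
      apply: sum_id => x; rewrite !addnA; exact: HA.
    apply: conj_eq_part pz pz' _ => y hy.
    move: (S y) (HP y); rewrite -cD // -cD' // oD oD'; lia.
  + case=> m [r [s [hsr hrm HB HP]]].
    have bm : m <= H.
      rewrite leqNgt; apply/negP => hm; move: (HB m s).
      rewrite z0 // z0' // /dl2 !eqxx; neqs; by move/eqP.
    have S : forall y, AT D y + (y == s) = AT D' y + (y == r).
      move=> y; rewrite /AT -(sum_dl2 H m s y bm) -(sum_dl2 H m r y bm).
      apply: sum_id => x; exact: HB.
    apply: conj_eq_part pz pz' _ => y hy.
    move: (S y) (HP y); rewrite /dl1 -cD // -cD' // oD oD'; lia.
- case.
  + case=> m [n [r [s [hsr hrn hnm HC HP]]]].
    have bm : m <= H.
      rewrite leqNgt; apply/negP => hm; move: (HC m r).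
      rewrite z0 // z0' // /dl2 !eqxx; neqs; by move/eqP.
    have hn : n <= H by exact: leq_trans (ltnW hnm) bm.
    have hr : r <= H by exact: leq_trans (ltnW hrn) hn.
    have S : forall y, AT D y + ((y == r) + (y == s)) = AT D' y + ((y == n) + (y == s)).
      move=> y.
      rewrite /AT -(sum_dl2_2 H m r n s y bm hn) -(sum_dl2_2 H m n r s y bm hr).
      apply: sum_id => x; rewrite !addnA; exact: HC.
    apply: (@dom_lemma _ _ _ _ _ r n hL hL' (leq_ltn_trans (leq0n s) hsr) hrn) => y hy.
    move: (S y) (HP y); rewrite -cD // -cD' // oD oD'; lia.
  + case=> m [r [s [hsr hrm HD HP]]].
    have bm : m <= H.
      rewrite leqNgt; apply/negP => hm; move: (HD m s).
      rewrite z0 // z0' // /dl2 !eqxx; neqs; by move/eqP.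
    have S : forall y, AT D y + (y == s) = AT D' y + (y == s).
      move=> y; rewrite /AT -{1}(sum_dl2 H m s y bm) -(sum_dl2 H r s y (leq_trans (ltnW hrm) bm)).
      apply: sum_id => x; exact: HD.
    apply: (@dom_lemma _ _ _ _ _ r m hL hL' (leq_ltn_trans (leq0n s) hsr) hrm) => y hy.
    move: (S y) (HP y); rewrite /dl1 -cD // -cD' // oD oD'; lia.
Qed.
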